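(* Consider the recursive network formation model with the utility function described in the context, with $\gamma=0$ and no upper bound on the number of nodes. If $$b_1-b_3\le c<b_1 \quad\text{and}\quad b_2-b_3<c_0<b_2-b_4,$$ then the resulting topology is a 2-star. That is, starting from a single node, for every $n$ the pairwise stable network reached after the $n$-th node has entered is: - for $n\le3$: a path on $n$ nodes; - for $n\ge4$: a 2-star on $n$ nodes, irrespective of the random order in which nodes are selected to move.
   Context: A 2-star on $n\ge4$ nodes consists of two adjacent ''center'' nodes. Every other node is a leaf adjacent to exactly one center and to nothing else. Each center has at least one leaf, and the numbers of leaves of the two centers differ by at most one. Networks are finite simple undirected graphs whose vertices (nodes) are self-interested agents. Parameters: benefits $b_1>b_2>b_3>b_4>\dots>0$, where $b_i$ is the benefit a node obtains from a node at distance $i$; a link cost $c$ per immediate neighbor; an intermediation fraction $\gamma$ with $0\le\gamma<1$; and a network entry factor $c_0$. Notation: $N$ is the set of nodes currently in the network, $d_j$ the degree of $j$, and $l(j,w)$ the graph distance. A node $x$ is essential for a pair $y,z$ (with $x\notin\{y,z\}$) if $x$ lies on every path joining $y$ and $z$. Write $E(y,z)$ for the set of nodes essential for $y,z$ and $e(y,z)=|E(y,z)|$. Only pairs joined by a path contribute to the sums below. Utility of node $j$ in network $g$: $$u_j(g)=-c_0\,d_{T(j)}\mathbf 1_{\{j=\mathrm{NE}\}}+d_j(b_1-c)+\sum_{w\in N,\ l(j,w)>1}b_{l(j,w)}-\sum_{w\in N,\ E(j,w)\ne\emptyset}\gamma\, b_{l(j,w)}+\sum_{y,z\in N,\ j\in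 E(y,z)}\frac{\gamma}{e(y,z)}\,2\,b_{l(y,z)}.$$ Here $\mathbf 1_{\{j=\mathrm{NE}\}}=1$ exactly when $j$ is a newly entering node evaluating the creation of its first link. $T(j)$ is the existing node to which $j$ forms that first link, and $d_{T(j)}$ is that node's degree before the link. The network before entry gives the entering node utility $0$. Pairwise stability: $g$ is pairwise stable if (a) for every link $(i,j)\in g$, $u_i(g\setminus\{(i,j)\})\le u_i(g)$ and $u_j(g\setminus\{(i,j)\})\le u_j(g)$; and (b) for every non-link $(i,j)\notin g$, if $u_i(g\cup\{(i,j)\})>u_i(g)$ then $u_j(g\cup\{(i,j)\})<u_j(g)$. Recursive model of network formation: - The process starts with a single node. - When the current network of $n-1$ nodes is pairwise stable, a new node considers entering. Its options are to stay out or to propose a link to one existing node. The link forms iff the receiving node's utility does not decrease. No existing node can link to the newcomer before it has formed this first link. - After entry, nodes are repeatedly chosen at random to move. A chosen node plays a myopic best response among three options: create a link with a non-neighbor (the link forms only if the other node's utility does not decrease, which the proposer anticipates); delete a link with a neighbor (unilaterally); or keep the status quo. It alters a link only if this strictly increases its current utility. - This continues until the network is pairwise stable; then the next node considers entering, and so on. ''The resulting topology is X'' means: for every number $n$ of nodes, every pairwise stable network reached after the $n$-th node has entered is a network of topology X on $n$ nodes, irrespective of the random choices. *)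

(* Defs.v *)
From HB Require Import structures.
From mathcomp Require Import all_boot all_order all_algebra.
Set Implicit Arguments. Unset Strict Implicit. Unset Printing Implicit Defensive.
Import Order.TTheory GRing.Theory Num.Theory.
Local Open Scope ring_scope.

(* A network with n nodes has node set N = {0,...,n-1}; the k-th entering
   node (k = 1, 2, ...) is labelled k-1.  A network is an adjacency relation
   (only its restriction to N matters). *)
Definition graph := nat -> nat -> bool.

Definition nodes (n : nat) : seq nat := iota 0 n.

Fixpoint walk (g : graph) (n : nat) (P : pred nat) (k : nat) (i j : nat) : bool :=
  match k with
  | 0 => [&& i == j, (i < n)%N & P i]
  | k'.+1 => has (fun m => [&& walk g n P k' i m, g m j, (j < n)%N & P j]) (nodes n)
  end.

Definition conn (g : graph) (n i j : nat) : bool :=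
  has (fun k => walk g n predT k i j) (nodes n).

(* graph distance l(i,j) (meaningful when conn g n i j) *)
Definition dist (g : graph) (n i j : nat) : nat :=
  find (fun k => walk g n predT k i j) (nodes n).

Definition essential (g : graph) (n x y z : nat) : bool :=
  [&& x != y, x != z, (x < n)%N &
      ~~ has (fun k => walk g n (fun v => v != x) k y z) (nodes n)].

Definition ess (g : graph) (n y z : nat) : seq nat :=
  [seq x <- nodes n | essential g n x y z].

Definition deg (g : graph) (n j : nat) : nat := count (g j) (nodes n).

Definition add_link (g : graph) (i j : nat) : graph :=
  fun x y => [|| g x y, (x == i) && (y == j) | (x == j) && (y == i)].

Definition del_link (g : graph) (i j : nat) : graph :=
  fun x y => g x y && ~~ (((x == i) && (y == j)) || ((x == j) && (y == i))).

Section Model.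
Variables (R : realFieldType) (b : nat -> R) (c gam c0 : R).

(* utility of node j in network g on N = [0,n), without the entry term
   (i.e. for nodes that are not a newcomer evaluating its first link) *)
Definition util (g : graph) (n j : nat) : R :=
  (deg g n j)%:R * (b 1%N - c)
  + \sum_(w <- nodes n | conn g n j w && (1 < dist g n j w)%N) b (dist g n j w)
  - \sum_(w <- nodes n | conn g n j w && (ess g n j w != [::])) gam * b (dist g n j w)
  + \sum_(y <- nodes n) \sum_(z <- nodes n | [&& (y < z)%N, conn g n y z & j \in ess g n y z])
      gam / (size (ess g n y z))%:R * 2 * b (dist g n y z).

Definition entry_util (g : graph) (n T : nat) : R :=
  util (add_link g n T) n.+1 n - c0 * (deg g n T)%:R.

Definition accepts (g : graph) (n T : nat) : Prop :=
  util g n T <= util (add_link g n T) n.+1 T.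

Definition pstable (g : graph) (n : nat) : Prop :=
  (forall i j, (i < n)%N -> (j < n)%N -> g i j ->
     util (del_link g i j) n i <= util g n i /\ util (del_link g i j) n j <= util g n j)
  /\ (forall i j, (i < n)%N -> (j < n)%N -> i != j -> ~~ g i j ->
     util g n i < util (add_link g i j) n i -> util (add_link g i j) n j < util g n j).

Definition feasible_move (g : graph) (n i : nat) (g' : graph) : Prop :=
  (exists j, [/\ (j < n)%N, j != i, g i j & g' = del_link g i j]) \/
  (exists j, [/\ (j < n)%N, j != i, ~~ g i j, util g n j <= util (add_link g i j) n j
                & g' = add_link g i j]).

Definition br_step (g : graph) (n : nat) (g' : graph) : Prop :=
  exists i, [/\ (i < n)%N, feasible_move g n i g', util g n i < util g' n i &
    forall g'', feasible_move g n i g'' -> util g'' n i <= util g' n i].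

Inductive reached : nat -> graph -> Prop :=
| reached_init : reached 1 (fun _ _ => false)
| reached_entry n g T :
    reached n g -> pstable g n -> (T < n)%N -> accepts g n T ->
    0 < entry_util g n T ->
    (forall T', (T' < n)%N -> accepts g n T' -> entry_util g n T' <= entry_util g n T) ->
    reached n.+1 (add_link g n T)
| reached_move n g g' :
    reached n g -> ~ pstable g n -> br_step g n g' -> reached n g'.

End Model.

Definition is_path (g : graph) (n : nat) : Prop :=
  exists p : seq nat, perm_eq p (nodes n) /\
    forall x y, (x < n)%N -> (y < n)%N ->
      g x y = has (fun k => ((nth 0%N p k == x) && (nth 0%N p k.+1 == y))
                            || ((nth 0%N p k == y) && (nth 0%N p k.+1 == x)))
                  (iota 0 (size p).-1).

Definition is_2star (g : graph) (n : nat) : Prop :=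
  (4 <= n)%N /\
  exists x y, [/\ (x < n)%N, (y < n)%N, x != y, g x y &
    [/\ forall v, (v < n)%N -> v != x -> v != y ->
          (g v x (+) g v y) /\
          (forall w, (w < n)%N -> w != x -> w != y -> ~~ g v w),
        (1 <= count (fun v => [&& v != x, v != y & g x v]) (nodes n))%N,
        (1 <= count (fun v => [&& v != x, v != y & g y v]) (nodes n))%N,
        (count (fun v => [&& v != x, v != y & g x v]) (nodes n)
           <= (count (fun v => [&& v != x, v != y & g y v]) (nodes n)).+1)%N &
        (count (fun v => [&& v != x, v != y & g y v]) (nodes n)
           <= (count (fun v => [&& v != x, v != y & g x v]) (nodes n)).+1)%N]].

(* Main.v *)
Require Import Defs.

From HB Require Import structures.
From mathcomp Require Import all_boot all_order all_algebra.
From mathcomp Require Import ring lra zify.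
From Stdlib Require Import FunctionalExtensionality.
Set Implicit Arguments. Unset Strict Implicit. Unset Printing Implicit Defensive.
Import Order.TTheory GRing.Theory Num.Theory.
Local Open Scope ring_scope.

Lemma mem_nodes v n : (v \in nodes n) = (v < n)%N.
Proof. by rewrite /nodes mem_iota. Qed.

Lemma find_iota0 (p : pred nat) N m : (m < N)%N -> p m ->
  (forall k, (k < m)%N -> ~~ p k) -> find p (iota 0 N) = m.
Proof.
move=> hm pm hb.
rewrite -(subnKC (ltnW hm)) iotaD add0n find_cat.
have -> : has p (iota 0 m) = false.
  by apply/negbTE/hasPn => k; rewrite mem_iota => /andP[_ hk]; apply: hb.
rewrite size_iota; case E: (N - m)%N => [|r]; first lia.
by rewrite /= pm addn0.
Qed.

Section Walks.
Variables (g : graph) (N j : nat) (d : nat -> nat).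
Hypotheses (H0 : d j = 0%N)
  (Hlip : forall u v, (u < N)%N -> (v < N)%N -> g u v -> (d v <= (d u).+1)%N)
  (Hz : forall w, (w < N)%N -> d w = 0%N -> w = j) (HjN : (j < N)%N)
  (Hpred : forall w, (w < N)%N -> (0 < d w)%N -> (d w < N)%N ->
     exists2 u, (u < N)%N & g u w && (d u == (d w).-1)).

Lemma walk_le k w : walk g N predT k j w -> (d w <= k)%N.
Proof.
elim: k w => [|k IH] w /=.
  by case/and3P => /eqP <- _ _; rewrite H0.
case/hasP => m; rewrite mem_nodes => hm /and4P[hw hg hwN _].
by rewrite (leq_trans (Hlip hm hwN hg)) // ltnS IH.
Qed.

Lemma walk_ex k : (k < N)%N -> forall w, (w < N)%N -> d w = k -> walk g N predT k j w.
Proof.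
elim: k => [|k IH] hk w hw hd /=.
  by rewrite (Hz hw hd) eqxx HjN.
have := Hpred hw; rewrite hd => /(_ isT) /(_ hk) [u hu /andP[hg /eqP hdu]].
apply/hasP; exists u; first by rewrite mem_nodes.
rewrite hg hw andbT /= IH //; try exact: ltnW; by rewrite ?hdu ?hd.
Qed.

Lemma conn_d w : (w < N)%N -> conn g N j w = (d w < N)%N.
Proof.
move=> hw; rewrite /conn; apply/hasP/idP.
  by case=> k; rewrite mem_nodes => hk /walk_le h; exact: leq_ltn_trans h hk.
move=> h; exists (d w); first by rewrite mem_nodes.
exact: walk_ex.
Qed.

Lemma dist_d w : (w < N)%N -> (d w < N)%N -> dist g N j w = d w.
Proof.
move=> hw h; rewrite /dist /nodes; apply: find_iota0 => //.
  exact: walk_ex.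
by move=> k hk; apply/negP => /walk_le; rewrite leqNgt hk.
Qed.

Hypothesis Hirr : ~~ g j j.

Lemma deg_count : deg g N j = count (fun w => d w == 1%N) (nodes N).
Proof.
apply: eq_in_count => w; rewrite mem_nodes => hw.
apply/idP/eqP.
  move=> hg; have := Hlip HjN hw hg; rewrite H0.
  case E: (d w) => [|[|k]] //= _.
  by move: hg; rewrite (Hz hw E) (negbTE Hirr).
move=> h1.
have hjw : w != j by apply/eqP => e; move: h1; rewrite e H0.
have hN1 : (1 < N)%N by move/eqP: hjw; lia.
have := Hpred hw; rewrite h1 => /(_ isT) /(_ hN1) [u hu /andP[hg /eqP hdu]].
by move/(Hz hu): hdu => e; rewrite -e.
Qed.

End Walks.

Section Util.
Variables (R : realFieldType) (b : nat -> R) (c : R).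

Definition Hn (N k : nat) : R :=
  if (k < N)%N then (if k == 1%N then b 1%N - c else if (1 < k)%N then b k else 0) else 0.

Lemma sum_count (r : seq nat) (P : pred nat) (a : R) :
  \sum_(w <- r) (if P w then a else 0) = (count P r)%:R * a.
Proof.
elim: r => [|x r IH]; first by rewrite big_nil mul0r.
rewrite big_cons IH /= natrD mulrDl; case: (P x) => /=; by rewrite ?mul1r ?mul0r ?add0r.
Qed.

Lemma sum_const_on (r : seq nat) (F : nat -> R) k :
  (forall w, w \in r -> F w = k) -> \sum_(w <- r) F w = (size r)%:R * k.
Proof.
elim: r => [|x r IH] h; first by rewrite big_nil mul0r.
rewrite big_cons IH => [|w hw]; last by apply: h; rewrite in_cons hw orbT.
by rewrite h ?mem_head // /= -add1n natrD mulrDl mul1r.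
Qed.

Lemma util_d (g : graph) N j d :
  d j = 0%N ->
  (forall u v, (u < N)%N -> (v < N)%N -> g u v -> (d v <= (d u).+1)%N) ->
  (forall w, (w < N)%N -> d w = 0%N -> w = j) -> (j < N)%N ->
  (forall w, (w < N)%N -> (0 < d w)%N -> (d w < N)%N ->
     exists2 u, (u < N)%N & g u w && (d u == (d w).-1)) ->
  ~~ g j j ->
  util b c 0 g N j = \sum_(w <- nodes N) Hn N (d w).
Proof.
move=> H0 Hlip Hz HjN Hpred Hirr.
rewrite /util.
rewrite [X in _ + X]big1 => [|y _]; last by rewrite big1 // => z _; rewrite !mul0r.
rewrite [X in _ - X]big1 => [|w _]; last by rewrite mul0r.
rewrite subr0 addr0 (deg_count H0 Hlip Hz HjN Hpred Hirr) -sum_count.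
rewrite [X in _ + X]big_mkcond -big_split /=.
apply: eq_big_seq => w; rewrite mem_nodes => hw.
rewrite (conn_d H0 Hlip Hz HjN Hpred hw) /Hn.
case: (ltnP (d w) N) => h.
  rewrite (dist_d H0 Hlip Hz HjN Hpred hw h) /=.
  by case E: (d w) => [|[|k]] /=; rewrite ?addr0 ?add0r.
have -> : (d w == 1%N) = false.
  apply/negbTE/eqP => e; move: h; rewrite e => hN.
  have hjw : w != j by apply/eqP => e'; move: e; rewrite e' H0.
  by move/eqP: hjw; lia.
by rewrite add0r.
Qed.

Lemma deg_d (g : graph) N j d :
  d j = 0%N ->
  (forall u v, (u < N)%N -> (v < N)%N -> g u v -> (d v <= (d u).+1)%N) ->
  (forall w, (w < N)%N -> d w = 0%N -> w = j) -> (j < N)%N ->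
  (forall w, (w < N)%N -> (0 < d w)%N -> (d w < N)%N ->
     exists2 u, (u < N)%N & g u w && (d u == (d w).-1)) ->
  ~~ g j j ->
  (deg g N j)%:R = \sum_(w <- nodes N) (if d w == 1%N then 1 else 0) :> R.
Proof.
move=> H0 Hlip Hz HjN Hpred Hirr.
by rewrite (deg_count H0 Hlip Hz HjN Hpred Hirr) sum_count mulr1.
Qed.

End Util.

From HB Require Import structures.
From mathcomp Require Import all_boot all_order all_algebra.
From mathcomp Require Import ring lra zify.
From Stdlib Require Import FunctionalExtensionality.
Set Implicit Arguments. Unset Strict Implicit. Unset Printing Implicit Defensive.
Import Order.TTheory GRing.Theory Num.Theory.

Definition adj (x y : nat) (A B : seq nat) : graph := fun v w =>
  [|| (v == x) && (w == y), (v == y) && (w == x), (v == x) && (w \in A),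
      (w == x) && (v \in A), (v == y) && (w \in B) | (w == y) && (v \in B)].

Lemma adj_swap x y A B : adj x y A B = adj y x B A.
Proof.
apply: functional_extensionality => v; apply: functional_extensionality => w.
rewrite /adj.
by case: (v == x); case: (v == y); case: (w == x); case: (w == y); case: (v \in A); case: (v \in B);
 case: (w \in A); case: (w \in B).
Qed.

Lemma adj_eqmem x y A B A' B' : A =i A' -> B =i B' -> adj x y A B = adj x y A' B'.
Proof.
move=> hA hB.
apply: functional_extensionality => v; apply: functional_extensionality => w.
by rewrite /adj hA hB hA hB.
Qed.

Lemma add_link_sym (g : graph) i j : add_link g i j = add_link g j i.
Proof.
apply: functional_extensionality => v; apply: functional_extensionality => w.
rewrite /add_link.
by case: (v == i); case: (v == j); case: (w == i); case: (w == j).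
Qed.

Lemma del_link_sym (g : graph) i j : del_link g i j = del_link g j i.
Proof.
apply: functional_extensionality => v; apply: functional_extensionality => w.
rewrite /del_link.
by case: (v == i); case: (v == j); case: (w == i); case: (w == j); rewrite /= ?andbT ?andbF ?orbF.
Qed.

Lemma memF (u v : nat) (A : seq nat) : u \in A -> v \notin A -> (u == v) = false.
Proof. by move=> hu hv; apply/eqP => e; move: hv; rewrite -e hu. Qed.

Lemma uq_facts (x y a b : nat) (A B : seq nat) : uniq (x :: y :: a :: b :: A ++ B) ->
  ((x == y) = false) * ((y == x) = false) * ((x == a) = false) * ((a == x) = false)
  * ((x == b) = false) * ((b == x) = false) * ((y == a) = false) * ((a == y) = false)
  * ((y == b) = false) * ((b == y) = false) * ((a == b) = false) * ((b == a) = false)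
  * ((x \in A) = false) * ((x \in B) = false) * ((y \in A) = false) * ((y \in B) = false)
  * ((a \in A) = false) * ((a \in B) = false) * ((b \in A) = false) * ((b \in B) = false).
Proof.
rewrite /= !inE !mem_cat !negb_or cat_uniq.
case/and5P => /and5P[? ? ? ? ?] /and4P[? ? ? ?] /and3P[? ? ?] /andP[? ?] _.
by repeat split; apply/negbTE; rewrite // eq_sym.
Qed.

Lemma uq_AB (x y a b u : nat) (A B : seq nat) : uniq (x :: y :: a :: b :: A ++ B) -> u \in A -> (u \in B) = false.
Proof.
rewrite /= cat_uniq => /and5P[_ _ _ _ /and3P[_ /hasPn h _]] hu.
by apply/negbTE; apply/negP => hB; move: (h u hB); rewrite hu.
Qed.

Variant cat_spec (x y a b : nat) (A B : seq nat) (u : nat) :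
  bool -> bool -> bool -> bool -> bool -> bool -> Type :=
| CX of u = x : cat_spec x y a b A B u true false false false false false
| CY of u = y : cat_spec x y a b A B u false true false false false false
| CA of u = a : cat_spec x y a b A B u false false true false false false
| CB of u = b : cat_spec x y a b A B u false false false true false false
| CInA of u \in A : cat_spec x y a b A B u false false false false true false
| CInB of u \in B : cat_spec x y a b A B u false false false false false true.

Lemma catP (x y a b : nat) (A B : seq nat) u : uniq (x :: y :: a :: b :: A ++ B) ->
  u \in x :: y :: a :: b :: A ++ B ->
  cat_spec x y a b A B u (u == x) (u == y) (u == a) (u == b) (u \in A) (u \in B).
Proof.
move=> hU; have F := uq_facts hU.
rewrite !in_cons mem_cat.
case: (eqVneq u x) => [->|ux] /=; first by rewrite !F; constructor.
case: (eqVneq u y) => [->|uy] /=; first by rewrite !F; constructor.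
case: (eqVneq u a) => [->|ua] /=; first by rewrite !F; constructor.
case: (eqVneq u b) => [->|ub] /=; first by rewrite !F; constructor.
case hA: (u \in A) => /= h.
  by rewrite (uq_AB hU hA); constructor.
by rewrite h; constructor.
Qed.

From HB Require Import structures.
From mathcomp Require Import all_boot all_order all_algebra.
From mathcomp Require Import ring lra zify.
Set Implicit Arguments. Unset Strict Implicit. Unset Printing Implicit Defensive.
Import Order.TTheory GRing.Theory Num.Theory.
Local Open Scope ring_scope.

Lemma uniq_ins (l1 l2 : seq nat) n :
  uniq (l1 ++ l2) -> n \notin l1 ++ l2 -> uniq (l1 ++ n :: l2).
Proof.
move=> hu hn.
have hp : perm_eq (l1 ++ n :: l2) (n :: l1 ++ l2) by rewrite (perm_catCA l1 [:: n] l2).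
by rewrite (perm_uniq hp) /= hn hu.
Qed.

Lemma univ_perm (l : seq nat) N : uniq l -> (forall v, (v \in l) = (v < N)%N) ->
  perm_eq l (nodes N).
Proof. by move=> hu hm; apply: uniq_perm => // [|v]; rewrite ?iota_uniq // hm mem_nodes. Qed.

Lemma univ_size (l : seq nat) N : uniq l -> (forall v, (v \in l) = (v < N)%N) ->
  size l = N.
Proof. by move=> hu hm; rewrite (perm_size (univ_perm hu hm)) size_iota. Qed.

Lemma size_pos (u : nat) (A : seq nat) : u \in A -> (0 < size A)%N.
Proof. by case: A. Qed.

Section Scen.
Variables (R : realFieldType) (b : nat -> R) (c : R).

Lemma Hn1 N : (1 < N)%N -> Hn b c N 1 = b 1%N - c.
Proof. by rewrite /Hn => ->. Qed.
Lemma Hnk N k : (1 < k)%N -> (k < N)%N -> Hn b c N k = b k.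
Proof. by rewrite /Hn => h1 ->; case: k h1 => [|[|k]]. Qed.
Lemma Hn0 N : Hn b c N 0 = 0.
Proof. by rewrite /Hn; case: N. Qed.
Lemma HnN N : Hn b c N N = 0.
Proof. by rewrite /Hn ltnn. Qed.

Lemma S2 (x y a : nat) (A B : seq nat) N : uniq (x :: y :: a :: A ++ B) ->
  (forall v, (v \in x :: y :: a :: A ++ B) = (v < N)%N) ->
  util b c 0 (adj x y (a :: A) B) N a
  = (b 1%N - c) + (1 + size A)%:R * b 2%N + (size B)%:R * b 3%N.
Proof.
move=> hU hM.
have hN : N = (3 + size A + size B)%N by rewrite -(univ_size hU hM) /= size_cat; lia.
have hU4 : uniq (x :: y :: a :: N :: A ++ B).
  by apply: (uniq_ins (l1 := [:: x; y; a])) => //; rewrite hM ltnn.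
have hm : forall v, (v < N)%N -> v \in x :: y :: a :: N :: A ++ B.
  by move=> v; rewrite -hM !in_cons; case: (v == N); rewrite ?orbT.
have F := uq_facts hU4.
pose d w := if w == a then 0%N else if w == x then 1%N else if w == y then 2%N
  else if w \in A then 2%N else if w \in B then 3%N else N.
have hmA : forall w, w \in A -> w \in x :: y :: a :: N :: A ++ B.
  by move=> w h; rewrite !in_cons mem_cat h !orbT.
have hmB : forall w, w \in B -> w \in x :: y :: a :: N :: A ++ B.
  by move=> w h; rewrite !in_cons mem_cat h !orbT.
rewrite (@util_d _ b c _ N a d).
- rewrite -(perm_big _ (univ_perm hU hM)) /= !big_cons big_cat /=.
  rewrite (@sum_const_on _ A _ (b 2%N)); last first.
    move=> w hw; have hs := size_pos hw; have hw4 := hmA w hw; move: hw; rewrite /d.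
    by case: (catP hU4 hw4) => // _ _; apply: Hnk; lia.
  rewrite (@sum_const_on _ B _ (b 3%N)); last first.
    move=> w hw; have hs := size_pos hw; have hw4 := hmB w hw; move: hw; rewrite /d.
    by case: (catP hU4 hw4) => // _ _; apply: Hnk; lia.
  rewrite /d ?F !eqxx /= Hn0 Hn1 ?Hnk; try lia.
  rewrite natrD; ring.
- by rewrite /d eqxx.
- move=> u v hu hv; rewrite /d /adj !in_cons.
  case: (catP hU4 (hm u hu)) => hu'; case: (catP hU4 (hm v hv)) => hv' //=.
  all: try lia.
- move=> w hw; rewrite /d; case: (catP hU4 (hm w hw)) => e //=; lia.
- by rewrite -hM !in_cons eqxx !orbT.
- move=> w hw; rewrite /d /adj !in_cons; case: (catP hU4 (hm w hw)) => e //= h1 h2.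
  all: try first [ by exists x; rewrite -?hM ?in_cons ?F ?eqxx /= ?orbT
             | by exists y; rewrite -?hM ?in_cons ?F ?eqxx /= ?orbT
             | by exists a; rewrite -?hM ?in_cons ?F ?eqxx /= ?orbT
             | lia ].
- by rewrite /adj !in_cons ?F.
Qed.


End Scen.

From HB Require Import structures.
From mathcomp Require Import all_boot all_order all_algebra.
From mathcomp Require Import ring lra zify.
Set Implicit Arguments. Unset Strict Implicit. Unset Printing Implicit Defensive.
Import Order.TTheory GRing.Theory Num.Theory.
Local Open Scope ring_scope.

Inductive dOK (g : graph) N j (d : nat -> nat) : Prop :=
 DOK of d j = 0%N
  & (forall u v, (u < N)%N -> (v < N)%N -> g u v -> (d v <= (d u).+1)%N)
  & (forall w, (w < N)%N -> d w = 0%N -> w = j) & (j < N)%N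
  & (forall w, (w < N)%N -> (0 < d w)%N -> (d w < N)%N ->
     exists2 u, (u < N)%N & g u w && (d u == (d w).-1))
  & ~~ g j j.

Section OK.
Variables (R : realFieldType) (b : nat -> R) (c : R).
Lemma util_ok g N j d : dOK g N j d -> util b c 0 g N j = \sum_(w <- nodes N) Hn b c N (d w).
Proof. by case=> *; apply: util_d. Qed.
Lemma deg_ok g N j d : dOK g N j d ->
  (deg g N j)%:R = \sum_(w <- nodes N) (if d w == 1%N then 1 else 0) :> R.
Proof. by case=> *; apply: deg_d. Qed.
End OK.

Lemma notin_big (l : seq nat) n : (forall v, v \in l -> (v < n)%N) -> n \notin l.
Proof. by move=> h; apply/negP => /h; rewrite ltnn. Qed.

Lemma mem_ltn_ins (l1 l2 : seq nat) n m : (forall v, v \in l1 ++ l2 -> (v < n)%N) ->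
  (m <= n)%N -> forall v, v \in l1 ++ m :: l2 -> (v < n.+1)%N.
Proof.
move=> h hm v; rewrite mem_cat in_cons => /or3P[h1|/eqP->|h2] //.
  by have := h v; rewrite mem_cat h1 => /(_ isT) /ltnW.
by have := h v; rewrite mem_cat h2 orbT => /(_ isT) /ltnW.
Qed.

Lemma setup2 (x y : nat) (A B : seq nat) N : uniq (x :: y :: A ++ B) ->
  (forall v, (v \in x :: y :: A ++ B) = (v < N)%N) ->
  uniq (x :: y :: N :: N.+1 :: A ++ B) /\
  forall v, (v < N)%N -> v \in x :: y :: N :: N.+1 :: A ++ B.
Proof.
move=> hU hM; split.
  apply: (uniq_ins (l1 := [:: x; y; N])).
    apply: (uniq_ins (l1 := [:: x; y])) => //.
    by apply: notin_big => v; rewrite -hM.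
  apply: notin_big; apply: (mem_ltn_ins (l1 := [:: x; y])) => // v.
  by rewrite -hM.
by move=> v; rewrite -hM !in_cons; case: (v == N); case: (v == N.+1); rewrite ?orbT.
Qed.

Lemma setup3 (x y a : nat) (A B : seq nat) N : uniq (x :: y :: a :: A ++ B) ->
  (forall v, (v \in x :: y :: a :: A ++ B) = (v < N)%N) ->
  uniq (x :: y :: a :: N :: A ++ B) /\
  forall v, (v < N)%N -> v \in x :: y :: a :: N :: A ++ B.
Proof.
move=> hU hM; split.
  by apply: (uniq_ins (l1 := [:: x; y; a])) => //; rewrite hM ltnn.
by move=> v; rewrite -hM !in_cons; case: (v == N); rewrite ?orbT.
Qed.

Lemma setup8 (x y a : nat) (A B : seq nat) N : uniq (x :: y :: a :: A ++ B) ->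
  (forall v, (v \in x :: y :: a :: A ++ B) = (v < N)%N) ->
  uniq (x :: y :: a :: N :: A ++ B) /\
  forall v, (v \in x :: y :: a :: N :: A ++ B) = (v < N.+1)%N.
Proof.
move=> hU hM; split.
  by apply: (uniq_ins (l1 := [:: x; y; a])) => //; rewrite hM ltnn.
move=> v; rewrite ltnS leq_eqVlt -hM !in_cons.
by case: (v == N); rewrite ?orbT //= orbF.
Qed.

Section Scen.
Variables (R : realFieldType) (b : nat -> R) (c : R).

Lemma S1 (x y : nat) (A B : seq nat) N : uniq (x :: y :: A ++ B) ->
  (forall v, (v \in x :: y :: A ++ B) = (v < N)%N) ->
  util b c 0 (adj x y A B) N x = (1 + size A)%:R * (b 1%N - c) + (size B)%:R * b 2%N
  /\ deg (adj x y A B) N x = (1 + size A)%N.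
Proof.
move=> hU hM.
have hN : N = (2 + size A + size B)%N by rewrite -(univ_size hU hM) /= size_cat; lia.
have [hU4 hm] := setup2 hU hM.
have F := uq_facts hU4.
pose d w := if w == x then 0%N else if w == y then 1%N
  else if w \in A then 1%N else if w \in B then 2%N else N.
have ok : dOK (adj x y A B) N x d by (split;
 [ by rewrite /d eqxx
 | move=> u v hu hv; rewrite /d; try rewrite /add_link; try rewrite /del_link;
   rewrite /adj ?in_cons; case: (catP hU4 (hm u hu)) => hu';
   case: (catP hU4 (hm v hv)) => hv' //=; try lia
 | move=> w hw; rewrite /d; case: (catP hU4 (hm w hw)) => ew //=; lia
 | by rewrite -hM ?in_cons ?eqxx ?orbT
 | move=> w hw; rewrite /d; try rewrite /add_link; try rewrite /del_link;
   rewrite /adj ?in_cons; case: (catP hU4 (hm w hw)) => ew //= h1 h2;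
   try first [ by exists x; rewrite -?hM ?in_cons ?F ?eqxx /= ?orbT
             | by exists y; rewrite -?hM ?in_cons ?F ?eqxx /= ?orbT
             | by exists N; rewrite -?hM ?in_cons ?F ?eqxx /= ?orbT
             | by exists N.+1; rewrite -?hM ?in_cons ?F ?eqxx /= ?orbT
             | lia ]
 | by try rewrite /add_link; try rewrite /del_link; rewrite /adj ?in_cons ?F ?eqxx /= ?andbF ]).
have hmA : forall w, w \in A -> w \in x :: y :: N :: N.+1 :: A ++ B.
  by move=> w h; rewrite !in_cons mem_cat h !orbT.
have hmB : forall w, w \in B -> w \in x :: y :: N :: N.+1 :: A ++ B.
  by move=> w h; rewrite !in_cons mem_cat h !orbT.
split.
  rewrite (util_ok b c ok) -(perm_big _ (univ_perm hU hM)) /= !big_cons big_cat /=.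
  rewrite (@sum_const_on _ A _ (b 1%N - c)); last first.
    move=> w hw; have hs := size_pos hw; have hw4 := hmA w hw; move: hw; rewrite /d.
    by case: (catP hU4 hw4) => // _ _; apply: Hn1; lia.
  rewrite (@sum_const_on _ B _ (b 2%N)); last first.
    move=> w hw; have hs := size_pos hw; have hw4 := hmB w hw; move: hw; rewrite /d.
    by case: (catP hU4 hw4) => // _ _; apply: Hnk; lia.
  rewrite /d ?F !eqxx /= Hn0 Hn1; last lia.
  rewrite natrD; ring.
apply/eqP; rewrite -(eqr_nat R) (deg_ok R ok) -(perm_big _ (univ_perm hU hM)) /=.
rewrite !big_cons big_cat /=.
rewrite (@sum_const_on _ A _ 1); last first.
  move=> w hw; have hw4 := hmA w hw; move: hw; rewrite /d.
  by case: (catP hU4 hw4).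
rewrite (@sum_const_on _ B _ 0); last first.
  move=> w hw; have hw4 := hmB w hw; move: hw; rewrite /d.
  by case: (catP hU4 hw4).
rewrite /d ?F !eqxx /= natrD; apply/eqP; ring.
Qed.

End Scen.

From HB Require Import structures.
From mathcomp Require Import all_boot all_order all_algebra.
From mathcomp Require Import ring lra zify.
Set Implicit Arguments. Unset Strict Implicit. Unset Printing Implicit Defensive.
Import Order.TTheory GRing.Theory Num.Theory.
Local Open Scope ring_scope.

Section Scen2.
Variables (R : realFieldType) (b : nat -> R) (c : R).

Lemma S2d (x y a : nat) (A B : seq nat) N : uniq (x :: y :: a :: A ++ B) ->
  (forall v, (v \in x :: y :: a :: A ++ B) = (v < N)%N) ->
  util b c 0 (adj x y (a :: A) B) N a = (b 1%N - c) + (1 + size A)%:R * b 2%N + (size B)%:R * b 3%N /\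
  deg (adj x y (a :: A) B) N a = 1%N.
Proof.
move=> hU hM0.
have hN : N = (3 + size A + size B)%N by rewrite -(univ_size hU hM0) /= size_cat; lia.
have [hU4 hm] := setup3 hU hM0.
have hM := hM0.
have hP := univ_perm hU hM0.
have F := uq_facts hU4.
have hmA : forall w, w \in A -> w \in x :: y :: a :: N :: A ++ B.
  by move=> w h; rewrite !in_cons mem_cat h !orbT.
have hmB : forall w, w \in B -> w \in x :: y :: a :: N :: A ++ B.
  by move=> w h; rewrite !in_cons mem_cat h !orbT.
pose d w := if w == a then 0%N else if w == x then 1%N else if w == y then 2%N else if w \in A then 2%N else if w \in B then 3%N else N.
have ok : dOK (adj x y (a :: A) B) N a d by (split;
 [ by rewrite /d eqxx
 | move=> u v hu hv; rewrite /d; try rewrite /add_link; try rewrite /del_link;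
   rewrite /adj ?in_cons; case: (catP hU4 (hm u hu)) => hu';
   case: (catP hU4 (hm v hv)) => hv' //=; try lia
 | move=> w hw; rewrite /d; case: (catP hU4 (hm w hw)) => ew //=; lia
 | by rewrite -hM ?in_cons ?eqxx ?orbT
 | move=> w hw; rewrite /d; try rewrite /add_link; try rewrite /del_link;
   rewrite /adj ?in_cons; case: (catP hU4 (hm w hw)) => ew //= h1 h2;
   try first [ by exists x; rewrite -?hM ?in_cons ?F ?eqxx /= ?orbT
             | by exists y; rewrite -?hM ?in_cons ?F ?eqxx /= ?orbT
             | by exists a; rewrite -?hM ?in_cons ?F ?eqxx /= ?orbT
             | by exists N; rewrite -?hM ?in_cons ?F ?eqxx /= ?orbT
             | lia ]
 | by try rewrite /add_link; try rewrite /del_link; rewrite /adj ?in_cons ?F ?eqxx /= ?andbF ]).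
have hsA : (0 < size A)%N -> Hn b c N 2%N = b 2%N by move=> hs; apply: Hnk; lia.
have hsB : (0 < size B)%N -> Hn b c N 3%N = b 3%N by move=> hs; apply: Hnk; lia.
split.
  rewrite (util_ok b c ok) -(perm_big _ hP) /= !big_cons big_cat /=.
  rewrite (@sum_const_on _ A _ (Hn b c N 2%N)); last first.
    move=> w hw; have hw4 := hmA w hw; move: hw; rewrite /d.
    by case: (catP hU4 hw4).
  rewrite (@sum_const_on _ B _ (Hn b c N 3%N)); last first.
    move=> w hw; have hw4 := hmB w hw; move: hw; rewrite /d.
    by case: (catP hU4 hw4).
  case: (posnP (size A)) => [sA|/hsA hA]; case: (posnP (size B)) => [sB|/hsB hB];
    rewrite ?sA ?sB ?mul0r ?hA ?hB /d ?F !eqxx /= ?Hn0 ?HnN ?Hn1 ?Hnk; try lia;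
    rewrite ?natrD; ring.
apply/eqP; rewrite -(eqr_nat R) (deg_ok R ok) -(perm_big _ hP) /= !big_cons big_cat /=.
rewrite (@sum_const_on _ A _ (if 2%N == 1%N then 1 else 0)); last first.
  move=> w hw; have hw4 := hmA w hw; move: hw; rewrite /d.
  by case: (catP hU4 hw4).
rewrite (@sum_const_on _ B _ (if 3%N == 1%N then 1 else 0)); last first.
  move=> w hw; have hw4 := hmB w hw; move: hw; rewrite /d.
  by case: (catP hU4 hw4).
rewrite /d ?F !eqxx /= ?mulr0 ?natrD; apply/eqP; ring.
Qed.

Lemma S3 (x y a e : nat) (A B : seq nat) N : uniq (x :: y :: a :: e :: A ++ B) ->
  (forall v, (v \in x :: y :: a :: e :: A ++ B) = (v < N)%N) ->
  util b c 0 (add_link (adj x y (a :: e :: A) B) a e) N a = 2%:R * (b 1%N - c) + (1 + size A)%:R * b 2%N + (size B)%:R * b 3%N.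
Proof.
move=> hU hM.
have hN : N = (4 + size A + size B)%N by rewrite -(univ_size hU hM) /= size_cat; lia.
have hU4 := hU.
have hm : forall v, (v < N)%N -> v \in x :: y :: a :: e :: A ++ B by move=> v; rewrite hM.
have hP := univ_perm hU hM.
have F := uq_facts hU4.
have hmA : forall w, w \in A -> w \in x :: y :: a :: e :: A ++ B.
  by move=> w h; rewrite !in_cons mem_cat h !orbT.
have hmB : forall w, w \in B -> w \in x :: y :: a :: e :: A ++ B.
  by move=> w h; rewrite !in_cons mem_cat h !orbT.
pose d w := if w == a then 0%N else if w == x then 1%N else if w == e then 1%N else if w == y then 2%N else if w \in A then 2%N else if w \in B then 3%N else N.
have ok : dOK (add_link (adj x y (a :: e :: A) B) a e) N a d by (split;
 [ by rewrite /d eqxx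
 | move=> u v hu hv; rewrite /d; try rewrite /add_link; try rewrite /del_link;
   rewrite /adj ?in_cons; case: (catP hU4 (hm u hu)) => hu';
   case: (catP hU4 (hm v hv)) => hv' //=; try lia
 | move=> w hw; rewrite /d; case: (catP hU4 (hm w hw)) => ew //=; lia
 | by rewrite -hM ?in_cons ?eqxx ?orbT
 | move=> w hw; rewrite /d; try rewrite /add_link; try rewrite /del_link;
   rewrite /adj ?in_cons; case: (catP hU4 (hm w hw)) => ew //= h1 h2;
   try first [ by exists x; rewrite -?hM ?in_cons ?F ?eqxx /= ?orbT
             | by exists y; rewrite -?hM ?in_cons ?F ?eqxx /= ?orbT
             | by exists a; rewrite -?hM ?in_cons ?F ?eqxx /= ?orbT
             | by exists e; rewrite -?hM ?in_cons ?F ?eqxx /= ?orbT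
             | lia ]
 | by try rewrite /add_link; try rewrite /del_link; rewrite /adj ?in_cons ?F ?eqxx /= ?andbF ]).
have hsA : (0 < size A)%N -> Hn b c N 2%N = b 2%N by move=> hs; apply: Hnk; lia.
have hsB : (0 < size B)%N -> Hn b c N 3%N = b 3%N by move=> hs; apply: Hnk; lia.
  rewrite (util_ok b c ok) -(perm_big _ hP) /= !big_cons big_cat /=.
  rewrite (@sum_const_on _ A _ (Hn b c N 2%N)); last first.
    move=> w hw; have hw4 := hmA w hw; move: hw; rewrite /d.
    by case: (catP hU4 hw4).
  rewrite (@sum_const_on _ B _ (Hn b c N 3%N)); last first.
    move=> w hw; have hw4 := hmB w hw; move: hw; rewrite /d.
    by case: (catP hU4 hw4).
  case: (posnP (size A)) => [sA|/hsA hA]; case: (posnP (size B)) => [sB|/hsB hB];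
    rewrite ?sA ?sB ?mul0r ?hA ?hB /d ?F !eqxx /= ?Hn0 ?HnN ?Hn1 ?Hnk; try lia;
    rewrite ?natrD; ring.
Qed.

Lemma S4 (x y a e : nat) (A B : seq nat) N : uniq (x :: y :: a :: e :: A ++ B) ->
  (forall v, (v \in x :: y :: a :: e :: A ++ B) = (v < N)%N) ->
  util b c 0 (add_link (adj x y (a :: A) (e :: B)) a e) N a = 2%:R * (b 1%N - c) + (1 + size A)%:R * b 2%N + (size B)%:R * b 3%N.
Proof.
move=> hU hM.
have hN : N = (4 + size A + size B)%N by rewrite -(univ_size hU hM) /= size_cat; lia.
have hU4 := hU.
have hm : forall v, (v < N)%N -> v \in x :: y :: a :: e :: A ++ B by move=> v; rewrite hM.
have hP := univ_perm hU hM.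
have F := uq_facts hU4.
have hmA : forall w, w \in A -> w \in x :: y :: a :: e :: A ++ B.
  by move=> w h; rewrite !in_cons mem_cat h !orbT.
have hmB : forall w, w \in B -> w \in x :: y :: a :: e :: A ++ B.
  by move=> w h; rewrite !in_cons mem_cat h !orbT.
pose d w := if w == a then 0%N else if w == x then 1%N else if w == e then 1%N else if w == y then 2%N else if w \in A then 2%N else if w \in B then 3%N else N.
have ok : dOK (add_link (adj x y (a :: A) (e :: B)) a e) N a d by (split;
 [ by rewrite /d eqxx
 | move=> u v hu hv; rewrite /d; try rewrite /add_link; try rewrite /del_link;
   rewrite /adj ?in_cons; case: (catP hU4 (hm u hu)) => hu';
   case: (catP hU4 (hm v hv)) => hv' //=; try lia
 | move=> w hw; rewrite /d; case: (catP hU4 (hm w hw)) => ew //=; lia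
 | by rewrite -hM ?in_cons ?eqxx ?orbT
 | move=> w hw; rewrite /d; try rewrite /add_link; try rewrite /del_link;
   rewrite /adj ?in_cons; case: (catP hU4 (hm w hw)) => ew //= h1 h2;
   try first [ by exists x; rewrite -?hM ?in_cons ?F ?eqxx /= ?orbT
             | by exists y; rewrite -?hM ?in_cons ?F ?eqxx /= ?orbT
             | by exists a; rewrite -?hM ?in_cons ?F ?eqxx /= ?orbT
             | by exists e; rewrite -?hM ?in_cons ?F ?eqxx /= ?orbT
             | lia ]
 | by try rewrite /add_link; try rewrite /del_link; rewrite /adj ?in_cons ?F ?eqxx /= ?andbF ]).
have hsA : (0 < size A)%N -> Hn b c N 2%N = b 2%N by move=> hs; apply: Hnk; lia.
have hsB : (0 < size B)%N -> Hn b c N 3%N = b 3%N by move=> hs; apply: Hnk; lia.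
  rewrite (util_ok b c ok) -(perm_big _ hP) /= !big_cons big_cat /=.
  rewrite (@sum_const_on _ A _ (Hn b c N 2%N)); last first.
    move=> w hw; have hw4 := hmA w hw; move: hw; rewrite /d.
    by case: (catP hU4 hw4).
  rewrite (@sum_const_on _ B _ (Hn b c N 3%N)); last first.
    move=> w hw; have hw4 := hmB w hw; move: hw; rewrite /d.
    by case: (catP hU4 hw4).
  case: (posnP (size A)) => [sA|/hsA hA]; case: (posnP (size B)) => [sB|/hsB hB];
    rewrite ?sA ?sB ?mul0r ?hA ?hB /d ?F !eqxx /= ?Hn0 ?HnN ?Hn1 ?Hnk; try lia;
    rewrite ?natrD; ring.
Qed.

Lemma S5 (x y a : nat) (A B : seq nat) N : uniq (x :: y :: a :: A ++ B) ->
  (forall v, (v \in x :: y :: a :: A ++ B) = (v < N)%N) ->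
  util b c 0 (add_link (adj x y (a :: A) B) a y) N y = (2 + size B)%:R * (b 1%N - c) + (size A)%:R * b 2%N.
Proof.
move=> hU hM0.
have hN : N = (3 + size A + size B)%N by rewrite -(univ_size hU hM0) /= size_cat; lia.
have [hU4 hm] := setup3 hU hM0.
have hM := hM0.
have hP := univ_perm hU hM0.
have F := uq_facts hU4.
have hmA : forall w, w \in A -> w \in x :: y :: a :: N :: A ++ B.
  by move=> w h; rewrite !in_cons mem_cat h !orbT.
have hmB : forall w, w \in B -> w \in x :: y :: a :: N :: A ++ B.
  by move=> w h; rewrite !in_cons mem_cat h !orbT.
pose d w := if w == y then 0%N else if w == x then 1%N else if w == a then 1%N else if w \in B then 1%N else if w \in A then 2%N else N.
have ok : dOK (add_link (adj x y (a :: A) B) a y) N y d by (split;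
 [ by rewrite /d eqxx
 | move=> u v hu hv; rewrite /d; try rewrite /add_link; try rewrite /del_link;
   rewrite /adj ?in_cons; case: (catP hU4 (hm u hu)) => hu';
   case: (catP hU4 (hm v hv)) => hv' //=; try lia
 | move=> w hw; rewrite /d; case: (catP hU4 (hm w hw)) => ew //=; lia
 | by rewrite -hM ?in_cons ?eqxx ?orbT
 | move=> w hw; rewrite /d; try rewrite /add_link; try rewrite /del_link;
   rewrite /adj ?in_cons; case: (catP hU4 (hm w hw)) => ew //= h1 h2;
   try first [ by exists x; rewrite -?hM ?in_cons ?F ?eqxx /= ?orbT
             | by exists y; rewrite -?hM ?in_cons ?F ?eqxx /= ?orbT
             | by exists a; rewrite -?hM ?in_cons ?F ?eqxx /= ?orbT
             | by exists N; rewrite -?hM ?in_cons ?F ?eqxx /= ?orbT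
             | lia ]
 | by try rewrite /add_link; try rewrite /del_link; rewrite /adj ?in_cons ?F ?eqxx /= ?andbF ]).
have hsA : (0 < size A)%N -> Hn b c N 2%N = b 2%N by move=> hs; apply: Hnk; lia.
have hsB : (0 < size B)%N -> Hn b c N 1%N = b 1%N - c by move=> hs; apply: Hn1; lia.
  rewrite (util_ok b c ok) -(perm_big _ hP) /= !big_cons big_cat /=.
  rewrite (@sum_const_on _ A _ (Hn b c N 2%N)); last first.
    move=> w hw; have hw4 := hmA w hw; move: hw; rewrite /d.
    by case: (catP hU4 hw4).
  rewrite (@sum_const_on _ B _ (Hn b c N 1%N)); last first.
    move=> w hw; have hw4 := hmB w hw; move: hw; rewrite /d.
    by case: (catP hU4 hw4).
  case: (posnP (size A)) => [sA|/hsA hA]; case: (posnP (size B)) => [sB|/hsB hB];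
    rewrite ?sA ?sB ?mul0r ?hA ?hB /d ?F !eqxx /= ?Hn0 ?HnN ?Hn1 ?Hnk; try lia;
    rewrite ?natrD; ring.
Qed.

Lemma S6a (x y a : nat) (A B : seq nat) N : uniq (x :: y :: a :: A ++ B) ->
  (forall v, (v \in x :: y :: a :: A ++ B) = (v < N)%N) ->
  util b c 0 (del_link (adj x y (a :: A) B) a x) N a = 0.
Proof.
move=> hU hM0.
have hN : N = (3 + size A + size B)%N by rewrite -(univ_size hU hM0) /= size_cat; lia.
have [hU4 hm] := setup3 hU hM0.
have hM := hM0.
have hP := univ_perm hU hM0.
have F := uq_facts hU4.
have hmA : forall w, w \in A -> w \in x :: y :: a :: N :: A ++ B.
  by move=> w h; rewrite !in_cons mem_cat h !orbT.
have hmB : forall w, w \in B -> w \in x :: y :: a :: N :: A ++ B.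
  by move=> w h; rewrite !in_cons mem_cat h !orbT.
pose d w := if w == a then 0%N else N.
have ok : dOK (del_link (adj x y (a :: A) B) a x) N a d by (split;
 [ by rewrite /d eqxx
 | move=> u v hu hv; rewrite /d; try rewrite /add_link; try rewrite /del_link;
   rewrite /adj ?in_cons; case: (catP hU4 (hm u hu)) => hu';
   case: (catP hU4 (hm v hv)) => hv' //=; try lia
 | move=> w hw; rewrite /d; case: (catP hU4 (hm w hw)) => ew //=; lia
 | by rewrite -hM ?in_cons ?eqxx ?orbT
 | move=> w hw; rewrite /d; try rewrite /add_link; try rewrite /del_link;
   rewrite /adj ?in_cons; case: (catP hU4 (hm w hw)) => ew //= h1 h2;
   try first [ by exists x; rewrite -?hM ?in_cons ?F ?eqxx /= ?orbT
             | by exists y; rewrite -?hM ?in_cons ?F ?eqxx /= ?orbT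
             | by exists a; rewrite -?hM ?in_cons ?F ?eqxx /= ?orbT
             | by exists N; rewrite -?hM ?in_cons ?F ?eqxx /= ?orbT
             | lia ]
 | by try rewrite /add_link; try rewrite /del_link; rewrite /adj ?in_cons ?F ?eqxx /= ?andbF ]).
have hsA : (0 < size A)%N -> Hn b c N N = 0 by move=> hs; apply: HnN.
have hsB : (0 < size B)%N -> Hn b c N N = 0 by move=> hs; apply: HnN.
  rewrite (util_ok b c ok) -(perm_big _ hP) /= !big_cons big_cat /=.
  rewrite (@sum_const_on _ A _ (Hn b c N N)); last first.
    move=> w hw; have hw4 := hmA w hw; move: hw; rewrite /d.
    by case: (catP hU4 hw4).
  rewrite (@sum_const_on _ B _ (Hn b c N N)); last first.
    move=> w hw; have hw4 := hmB w hw; move: hw; rewrite /d.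
    by case: (catP hU4 hw4).
  case: (posnP (size A)) => [sA|/hsA hA]; case: (posnP (size B)) => [sB|/hsB hB];
    rewrite ?sA ?sB ?mul0r ?hA ?hB /d ?F !eqxx /= ?Hn0 ?HnN ?Hn1 ?Hnk; try lia;
    rewrite ?natrD; ring.
Qed.

Lemma S6x (x y a : nat) (A B : seq nat) N : uniq (x :: y :: a :: A ++ B) ->
  (forall v, (v \in x :: y :: a :: A ++ B) = (v < N)%N) ->
  util b c 0 (del_link (adj x y (a :: A) B) a x) N x = (1 + size A)%:R * (b 1%N - c) + (size B)%:R * b 2%N.
Proof.
move=> hU hM0.
have hN : N = (3 + size A + size B)%N by rewrite -(univ_size hU hM0) /= size_cat; lia.
have [hU4 hm] := setup3 hU hM0.
have hM := hM0.
have hP := univ_perm hU hM0.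
have F := uq_facts hU4.
have hmA : forall w, w \in A -> w \in x :: y :: a :: N :: A ++ B.
  by move=> w h; rewrite !in_cons mem_cat h !orbT.
have hmB : forall w, w \in B -> w \in x :: y :: a :: N :: A ++ B.
  by move=> w h; rewrite !in_cons mem_cat h !orbT.
pose d w := if w == x then 0%N else if w == y then 1%N else if w \in A then 1%N else if w \in B then 2%N else N.
have ok : dOK (del_link (adj x y (a :: A) B) a x) N x d by (split;
 [ by rewrite /d eqxx
 | move=> u v hu hv; rewrite /d; try rewrite /add_link; try rewrite /del_link;
   rewrite /adj ?in_cons; case: (catP hU4 (hm u hu)) => hu';
   case: (catP hU4 (hm v hv)) => hv' //=; try lia
 | move=> w hw; rewrite /d; case: (catP hU4 (hm w hw)) => ew //=; lia
 | by rewrite -hM ?in_cons ?eqxx ?orbT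
 | move=> w hw; rewrite /d; try rewrite /add_link; try rewrite /del_link;
   rewrite /adj ?in_cons; case: (catP hU4 (hm w hw)) => ew //= h1 h2;
   try first [ by exists x; rewrite -?hM ?in_cons ?F ?eqxx /= ?orbT
             | by exists y; rewrite -?hM ?in_cons ?F ?eqxx /= ?orbT
             | by exists a; rewrite -?hM ?in_cons ?F ?eqxx /= ?orbT
             | by exists N; rewrite -?hM ?in_cons ?F ?eqxx /= ?orbT
             | lia ]
 | by try rewrite /add_link; try rewrite /del_link; rewrite /adj ?in_cons ?F ?eqxx /= ?andbF ]).
have hsA : (0 < size A)%N -> Hn b c N 1%N = b 1%N - c by move=> hs; apply: Hn1; lia.
have hsB : (0 < size B)%N -> Hn b c N 2%N = b 2%N by move=> hs; apply: Hnk; lia.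
  rewrite (util_ok b c ok) -(perm_big _ hP) /= !big_cons big_cat /=.
  rewrite (@sum_const_on _ A _ (Hn b c N 1%N)); last first.
    move=> w hw; have hw4 := hmA w hw; move: hw; rewrite /d.
    by case: (catP hU4 hw4).
  rewrite (@sum_const_on _ B _ (Hn b c N 2%N)); last first.
    move=> w hw; have hw4 := hmB w hw; move: hw; rewrite /d.
    by case: (catP hU4 hw4).
  case: (posnP (size A)) => [sA|/hsA hA]; case: (posnP (size B)) => [sB|/hsB hB];
    rewrite ?sA ?sB ?mul0r ?hA ?hB /d ?F !eqxx /= ?Hn0 ?HnN ?Hn1 ?Hnk; try lia;
    rewrite ?natrD; ring.
Qed.

Lemma S7 (x y : nat) (A B : seq nat) N : uniq (x :: y :: A ++ B) ->
  (forall v, (v \in x :: y :: A ++ B) = (v < N)%N) ->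
  util b c 0 (del_link (adj x y A B) x y) N x = (size A)%:R * (b 1%N - c).
Proof.
move=> hU hM0.
have hN : N = (2 + size A + size B)%N by rewrite -(univ_size hU hM0) /= size_cat; lia.
have [hU4 hm] := setup2 hU hM0.
have hM := hM0.
have hP := univ_perm hU hM0.
have F := uq_facts hU4.
have hmA : forall w, w \in A -> w \in x :: y :: N :: N.+1 :: A ++ B.
  by move=> w h; rewrite !in_cons mem_cat h !orbT.
have hmB : forall w, w \in B -> w \in x :: y :: N :: N.+1 :: A ++ B.
  by move=> w h; rewrite !in_cons mem_cat h !orbT.
pose d w := if w == x then 0%N else if w \in A then 1%N else N.
have ok : dOK (del_link (adj x y A B) x y) N x d by (split;
 [ by rewrite /d eqxx
 | move=> u v hu hv; rewrite /d; try rewrite /add_link; try rewrite /del_link;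
   rewrite /adj ?in_cons; case: (catP hU4 (hm u hu)) => hu';
   case: (catP hU4 (hm v hv)) => hv' //=; try lia
 | move=> w hw; rewrite /d; case: (catP hU4 (hm w hw)) => ew //=; lia
 | by rewrite -hM ?in_cons ?eqxx ?orbT
 | move=> w hw; rewrite /d; try rewrite /add_link; try rewrite /del_link;
   rewrite /adj ?in_cons; case: (catP hU4 (hm w hw)) => ew //= h1 h2;
   try first [ by exists x; rewrite -?hM ?in_cons ?F ?eqxx /= ?orbT
             | by exists y; rewrite -?hM ?in_cons ?F ?eqxx /= ?orbT
             | by exists N; rewrite -?hM ?in_cons ?F ?eqxx /= ?orbT
             | by exists N.+1; rewrite -?hM ?in_cons ?F ?eqxx /= ?orbT
             | lia ]
 | by try rewrite /add_link; try rewrite /del_link; rewrite /adj ?in_cons ?F ?eqxx /= ?andbF ]).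
have hsA : (0 < size A)%N -> Hn b c N 1%N = b 1%N - c by move=> hs; apply: Hn1; lia.
have hsB : (0 < size B)%N -> Hn b c N N = 0 by move=> hs; apply: HnN.
  rewrite (util_ok b c ok) -(perm_big _ hP) /= !big_cons big_cat /=.
  rewrite (@sum_const_on _ A _ (Hn b c N 1%N)); last first.
    move=> w hw; have hw4 := hmA w hw; move: hw; rewrite /d.
    by case: (catP hU4 hw4).
  rewrite (@sum_const_on _ B _ (Hn b c N N)); last first.
    move=> w hw; have hw4 := hmB w hw; move: hw; rewrite /d.
    by case: (catP hU4 hw4).
  case: (posnP (size A)) => [sA|/hsA hA]; case: (posnP (size B)) => [sB|/hsB hB];
    rewrite ?sA ?sB ?mul0r ?hA ?hB /d ?F !eqxx /= ?Hn0 ?HnN ?Hn1 ?Hnk; try lia;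
    rewrite ?natrD; ring.
Qed.

Lemma S8 (x y a : nat) (A B : seq nat) N : uniq (x :: y :: a :: A ++ B) ->
  (forall v, (v \in x :: y :: a :: A ++ B) = (v < N)%N) ->
  util b c 0 (add_link (adj x y (a :: A) B) N a) N.+1 N = (b 1%N - c) + b 2%N + (1 + size A)%:R * b 3%N + (size B)%:R * b 4%N.
Proof.
move=> hU hM0.
have hN : N = (3 + size A + size B)%N by rewrite -(univ_size hU hM0) /= size_cat; lia.
have [hU4 hM] := setup8 hU hM0.
have hm : forall v, (v < N.+1)%N -> v \in x :: y :: a :: N :: A ++ B by move=> v; rewrite hM.
have hP := univ_perm hU4 hM.
have F := uq_facts hU4.
have hmA : forall w, w \in A -> w \in x :: y :: a :: N :: A ++ B.
  by move=> w h; rewrite !in_cons mem_cat h !orbT.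
have hmB : forall w, w \in B -> w \in x :: y :: a :: N :: A ++ B.
  by move=> w h; rewrite !in_cons mem_cat h !orbT.
pose d w := if w == N then 0%N else if w == a then 1%N else if w == x then 2%N else if w == y then 3%N else if w \in A then 3%N else if w \in B then 4%N else N.+1.
have ok : dOK (add_link (adj x y (a :: A) B) N a) N.+1 N d by (split;
 [ by rewrite /d eqxx
 | move=> u v hu hv; rewrite /d; try rewrite /add_link; try rewrite /del_link;
   rewrite /adj ?in_cons; case: (catP hU4 (hm u hu)) => hu';
   case: (catP hU4 (hm v hv)) => hv' //=; try lia
 | move=> w hw; rewrite /d; case: (catP hU4 (hm w hw)) => ew //=; lia
 | by rewrite -hM ?in_cons ?eqxx ?orbT
 | move=> w hw; rewrite /d; try rewrite /add_link; try rewrite /del_link;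
   rewrite /adj ?in_cons; case: (catP hU4 (hm w hw)) => ew //= h1 h2;
   try first [ by exists x; rewrite -?hM ?in_cons ?F ?eqxx /= ?orbT
             | by exists y; rewrite -?hM ?in_cons ?F ?eqxx /= ?orbT
             | by exists a; rewrite -?hM ?in_cons ?F ?eqxx /= ?orbT
             | by exists N; rewrite -?hM ?in_cons ?F ?eqxx /= ?orbT
             | lia ]
 | by try rewrite /add_link; try rewrite /del_link; rewrite /adj ?in_cons ?F ?eqxx /= ?andbF ]).
have hsA : (0 < size A)%N -> Hn b c N.+1 3%N = b 3%N by move=> hs; apply: Hnk; lia.
have hsB : (0 < size B)%N -> Hn b c N.+1 4%N = b 4%N by move=> hs; apply: Hnk; lia.
  rewrite (util_ok b c ok) -(perm_big _ hP) /= !big_cons big_cat /=.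
  rewrite (@sum_const_on _ A _ (Hn b c N.+1 3%N)); last first.
    move=> w hw; have hw4 := hmA w hw; move: hw; rewrite /d.
    by case: (catP hU4 hw4).
  rewrite (@sum_const_on _ B _ (Hn b c N.+1 4%N)); last first.
    move=> w hw; have hw4 := hmB w hw; move: hw; rewrite /d.
    by case: (catP hU4 hw4).
  case: (posnP (size A)) => [sA|/hsA hA]; case: (posnP (size B)) => [sB|/hsB hB];
    rewrite ?sA ?sB ?mul0r ?hA ?hB /d ?F !eqxx /= ?Hn0 ?HnN ?Hn1 ?Hnk; try lia;
    rewrite ?natrD; ring.
Qed.

End Scen2.

From HB Require Import structures.
From mathcomp Require Import all_boot all_order all_algebra.
From mathcomp Require Import ring lra zify.
Set Implicit Arguments. Unset Strict Implicit. Unset Printing Implicit Defensive.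
Import Order.TTheory GRing.Theory Num.Theory.
Local Open Scope ring_scope.

Lemma trans_univ (l l2 : seq nat) N : perm_eq l l2 -> uniq l ->
  (forall v, (v \in l) = (v < N)%N) ->
  uniq l2 /\ (forall v, (v \in l2) = (v < N)%N).
Proof. by move=> hp hu hm; split; [rewrite -(perm_uniq hp) | move=> v; rewrite -(perm_mem hp)]. Qed.

Lemma transA (x y : nat) (A A2 B : seq nat) N : perm_eq A A2 ->
  uniq (x :: y :: A ++ B) -> (forall v, (v \in x :: y :: A ++ B) = (v < N)%N) ->
  [/\ uniq (x :: y :: A2 ++ B), (forall v, (v \in x :: y :: A2 ++ B) = (v < N)%N)
    & adj x y A B = adj x y A2 B].
Proof.
move=> hp hu hm.
have hp' : perm_eq (x :: y :: A ++ B) (x :: y :: A2 ++ B) by rewrite !perm_cons perm_cat2r.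
have [? ?] := trans_univ hp' hu hm; split => //.
by apply: adj_eqmem => // v; rewrite (perm_mem hp).
Qed.

Lemma transB (x y : nat) (A B B2 : seq nat) N : perm_eq B B2 ->
  uniq (x :: y :: A ++ B) -> (forall v, (v \in x :: y :: A ++ B) = (v < N)%N) ->
  [/\ uniq (x :: y :: A ++ B2), (forall v, (v \in x :: y :: A ++ B2) = (v < N)%N)
    & adj x y A B = adj x y A B2].
Proof.
move=> hp hu hm.
have hp' : perm_eq (x :: y :: A ++ B) (x :: y :: A ++ B2) by rewrite !perm_cons perm_cat2l.
have [? ?] := trans_univ hp' hu hm; split => //.
by apply: adj_eqmem => // v; rewrite (perm_mem hp).
Qed.

Lemma univ_swap (x y : nat) (A B : seq nat) N :
  uniq (x :: y :: A ++ B) -> (forall v, (v \in x :: y :: A ++ B) = (v < N)%N) ->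
  uniq (y :: x :: B ++ A) /\ (forall v, (v \in y :: x :: B ++ A) = (v < N)%N).
Proof.
apply: trans_univ.
have -> : y :: x :: B ++ A = [:: y] ++ [:: x] ++ (B ++ A) by [].
by rewrite perm_sym (perm_catCA [:: y] [:: x]) /= !perm_cons perm_catC.
Qed.

Lemma uniqA (x y : nat) (A B : seq nat) : uniq (x :: y :: A ++ B) -> uniq A.
Proof. by rewrite /= cat_uniq => /and3P[_ _ /and3P[]]. Qed.

Lemma pickA1 (a : nat) (A : seq nat) : uniq A -> a \in A -> perm_eq A (a :: rem a A).
Proof. by move=> _ h; apply: perm_to_rem. Qed.

Lemma pickA2 (a e : nat) (A : seq nat) : uniq A -> a \in A -> e \in A -> e != a ->
  perm_eq A (a :: e :: rem e (rem a A)).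
Proof.
move=> hu ha he hea.
apply: perm_trans (perm_to_rem ha) _; rewrite perm_cons.
by apply: perm_to_rem; rewrite (mem_rem_uniq _ hu) !inE hea he.
Qed.

Lemma perm_ae (a e : nat) (A B : seq nat) :
  perm_eq ((a :: A) ++ e :: B) (a :: e :: A ++ B).
Proof. by rewrite /= perm_cons (perm_catCA A [:: e] B). Qed.

Section Pst.
Variables (R : realFieldType) (b : nat -> R) (c : R).
Hypotheses (h1pos : 0 < b 1%N - c) (h12 : b 1%N - c < b 2%N) (h13 : b 1%N - c <= b 3%N)
  (hb2 : 0 < b 2%N) (hb3 : 0 < b 3%N).

Ltac arith := have ? := h1pos; have ? := h12; have ? := h13; have ? := hb2; have ? := hb3; lra.

Lemma nn (k : nat) (z : R) : 0 <= z -> 0 <= k%:R * z.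
Proof. by move=> h; apply: mulr_ge0 => //; apply: ler0n. Qed.

Definition conda (g : graph) N i j :=
  util b c 0 (del_link g i j) N i <= util b c 0 g N i /\
  util b c 0 (del_link g i j) N j <= util b c 0 g N j.
Definition condb (g : graph) N i j :=
  util b c 0 g N i < util b c 0 (add_link g i j) N i ->
  util b c 0 (add_link g i j) N j < util b c 0 g N j.

Lemma conda_xy (x y : nat) (A B : seq nat) N : uniq (x :: y :: A ++ B) ->
  (forall v, (v \in x :: y :: A ++ B) = (v < N)%N) -> conda (adj x y A B) N x y.
Proof.
move=> hU hM; split.
  rewrite S7 // (S1 b c hU hM).1 natrD.
  have := nn (size B) (ltW hb2); move=> ?; arith.
rewrite del_link_sym adj_swap.
have [hU' hM'] := univ_swap hU hM.
rewrite S7 // (S1 b c hU' hM').1 natrD.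
have := nn (size A) (ltW hb2); move=> ?; arith.
Qed.

Ltac norm := rewrite /= ?natrD -?nat1r ?natrD.

Lemma uniqB (x y : nat) (A B : seq nat) : uniq (x :: y :: A ++ B) -> uniq B.
Proof. by rewrite /= cat_uniq => /and3P[_ _ /and3P[]]. Qed.

Lemma conda_sym (g : graph) N i j : conda g N i j -> conda g N j i.
Proof. by rewrite /conda del_link_sym => -[]. Qed.

Lemma conda_xa (x y a : nat) (A B : seq nat) N : uniq (x :: y :: A ++ B) ->
  (forall v, (v \in x :: y :: A ++ B) = (v < N)%N) -> a \in A ->
  conda (adj x y A B) N a x.
Proof.
move=> hU hM ha.
have [hU' hM' ->] := transA (pickA1 (uniqA hU) ha) hU hM.
split.
  rewrite S6a // (@S2d _ b c x y a (rem a A) B N hU' hM').1.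
  have := nn (size (rem a A)) (ltW hb2); have := nn (size B) (ltW hb3).
  norm; move=> ? ?; arith.
rewrite S6x // (S1 b c hU' hM').1.
have := nn (size B) (ltW hb2); norm; move=> ?; arith.
Qed.

Lemma notlt (u v : R) : v <= u -> ~ (u < v).
Proof. by move=> h1 h2; move: (le_lt_trans h1 h2); rewrite ltxx. Qed.

Lemma condb_AA (x y a e : nat) (A B : seq nat) N : uniq (x :: y :: A ++ B) ->
  (forall v, (v \in x :: y :: A ++ B) = (v < N)%N) -> a \in A -> e \in A -> e != a ->
  condb (adj x y A B) N a e.
Proof.
move=> hU hM ha he hea.
have [hU' hM' ->] := transA (pickA2 (uniqA hU) ha he hea) hU hM.
move=> h; exfalso; move: h; apply: notlt.
rewrite S3 // (@S2d _ b c x y a (e :: rem e (rem a A)) B N hU' hM').1; norm; arith.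
Qed.

Lemma condb_AB (x y a e : nat) (A B : seq nat) N : uniq (x :: y :: A ++ B) ->
  (forall v, (v \in x :: y :: A ++ B) = (v < N)%N) -> a \in A -> e \in B ->
  condb (adj x y A B) N a e.
Proof.
move=> hU hM ha he.
have [hU1 hM1 ->] := transA (pickA1 (uniqA hU) ha) hU hM.
have [hU2 hM2 ->] := transB (pickA1 (uniqB hU) he) hU1 hM1.
have hp : perm_eq (x :: y :: (a :: rem a A) ++ e :: rem e B)
    (x :: y :: a :: e :: rem a A ++ rem e B).
  by rewrite !perm_cons; first [apply: perm_ae | by rewrite (perm_catCA _ [:: e])].
have [hU3 hM3] := trans_univ hp hU2 hM2.
move=> h; exfalso; move: h; apply: notlt.
rewrite S4 // (@S2d _ b c x y a (rem a A) (e :: rem e B) N hU2 hM2).1; norm; arith.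
Qed.

Lemma condb_Ay (x y a : nat) (A B : seq nat) N : uniq (x :: y :: A ++ B) ->
  (forall v, (v \in x :: y :: A ++ B) = (v < N)%N) -> a \in A ->
  util b c 0 (add_link (adj x y A B) a y) N y < util b c 0 (adj x y A B) N y.
Proof.
move=> hU hM ha.
have [hU1 hM1 ->] := transA (pickA1 (uniqA hU) ha) hU hM.
rewrite S5 // adj_swap.
have [hU2 hM2] := univ_swap hU1 hM1.
rewrite (S1 b c hU2 hM2).1; norm; arith.
Qed.

Lemma nonadj_cls (x y : nat) (A B : seq nat) N i j : uniq (x :: y :: A ++ B) ->
  (forall v, (v \in x :: y :: A ++ B) = (v < N)%N) -> (i < N)%N -> (j < N)%N ->
  i != j -> ~~ adj x y A B i j ->
  [|| (i \in A) && (j \in A), (i \in A) && (j \in B), (i \in B) && (j \in A),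
      (i \in B) && (j \in B), (i \in A) && (j == y), (i == y) && (j \in A),
      (i \in B) && (j == x) | (i == x) && (j \in B)].
Proof.
move=> hU hM hi hj.
have [hU4 hm] := setup2 hU hM.
rewrite /adj; case: (catP hU4 (hm i hi)) => ei; case: (catP hU4 (hm j hj)) => ej;
  rewrite ?ei ?ej ?eqxx //=; lia.
Qed.

Lemma pst_DS (x y : nat) (A B : seq nat) N : uniq (x :: y :: A ++ B) ->
  (forall v, (v \in x :: y :: A ++ B) = (v < N)%N) -> pstable b c 0 (adj x y A B) N.
Proof.
move=> hU hM.
have [hU' hM'] := univ_swap hU hM.
split.
  move=> i j hi hj; rewrite {1}/adj.
  case/orP => [/andP[/eqP-> /eqP->]|]; first exact: conda_xy.
  case/orP => [/andP[/eqP-> /eqP->]|]; first exact/conda_sym/conda_xy.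
  case/orP => [/andP[/eqP-> h]|]; first exact/conda_sym/conda_xa.
  case/orP => [/andP[/eqP-> h]|]; first exact/conda_xa.
  rewrite adj_swap.
  case/orP => [/andP[/eqP-> h]|/andP[/eqP-> h]]; first exact/conda_sym/conda_xa.
  exact/conda_xa.
move=> i j hi hj hij hn.
have := nonadj_cls hU hM hi hj hij hn.
case/orP => [/andP[ha hb]|]; first by apply: condb_AA; rewrite // eq_sym.
case/orP => [/andP[ha hb]|]; first exact: condb_AB.
case/orP => [/andP[ha hb]|]; first by rewrite adj_swap; apply: condb_AB.
case/orP => [/andP[ha hb]|]; first by rewrite adj_swap; apply: condb_AA; rewrite // eq_sym.
case/orP => [/andP[ha /eqP->]|]; first by move=> _; apply: condb_Ay.
case/orP => [/andP[/eqP-> ha]|].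
  move=> h; exfalso; move: h; rewrite add_link_sym; apply: notlt; apply/ltW.
  exact: condb_Ay.
rewrite adj_swap.
case/orP => [/andP[ha /eqP->]|/andP[/eqP-> ha]]; first by move=> _; apply: condb_Ay.
move=> h; exfalso; move: h; rewrite add_link_sym; apply: notlt; apply/ltW.
exact: condb_Ay.
Qed.

End Pst.

From HB Require Import structures.
From mathcomp Require Import all_boot all_order all_algebra.
From mathcomp Require Import ring lra zify.
From Stdlib Require Import FunctionalExtensionality.
Set Implicit Arguments. Unset Strict Implicit. Unset Printing Implicit Defensive.
Import Order.TTheory GRing.Theory Num.Theory.
Local Open Scope ring_scope.

Lemma link_y (x y : nat) (A B : seq nat) N :
  add_link (adj x y A B) N y = adj x y A (N :: B).
Proof.
apply: functional_extensionality => v; apply: functional_extensionality => w.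
rewrite /add_link /adj !in_cons.
by case: (v == x); case: (v == y); case: (w == x); case: (w == y); case: (v \in A);
  case: (v \in B); case: (w \in A); case: (w \in B); case: (v == N); case: (w == N).
Qed.

Lemma link_x (x y : nat) (A B : seq nat) N :
  add_link (adj x y A B) N x = adj x y (N :: A) B.
Proof. by rewrite adj_swap link_y adj_swap. Qed.

Lemma link_leaf3 (x y a N : nat) :
  add_link (adj x y [:: a] [::]) N a = adj x a [:: y] [:: N].
Proof.
apply: functional_extensionality => v; apply: functional_extensionality => w.
rewrite /add_link /adj !in_cons !in_nil.
by case: (v == x); case: (v == y); case: (w == x); case: (w == y); case: (v == a);
  case: (w == a); case: (v == N); case: (w == N).
Qed.

Lemma univ_add (x y : nat) (A B : seq nat) N : uniq (x :: y :: A ++ B) ->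
  (forall v, (v \in x :: y :: A ++ B) = (v < N)%N) ->
  uniq (x :: y :: N :: A ++ B) /\ forall v, (v \in x :: y :: N :: A ++ B) = (v < N.+1)%N.
Proof.
move=> hU hM; split.
  by apply: (uniq_ins (l1 := [:: x; y])) => //; rewrite hM ltnn.
move=> v; rewrite ltnS leq_eqVlt -hM !in_cons.
by case: (v == N); rewrite ?orbT //= orbF.
Qed.

Section Entry.
Variables (R : realFieldType) (b : nat -> R) (c c0 : R).
Hypotheses (h1pos : 0 < b 1%N - c) (h12 : b 1%N - c < b 2%N) (h13 : b 1%N - c <= b 3%N)
  (hb2 : 0 < b 2%N) (hb3 : 0 < b 3%N) (hb4 : 0 < b 4%N) (h34 : b 4%N < b 3%N)
  (hc01 : b 2%N - b 3%N < c0) (hc02 : c0 < b 2%N - b 4%N).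

Ltac arith := have ? := h1pos; have ? := h12; have ? := h13; have ? := hb2; have ? := hb3;
  have ? := hb4; have ? := h34; have ? := hc01; have ? := hc02; lra.

Lemma Ey (x y : nat) (A B : seq nat) N : uniq (x :: y :: A ++ B) ->
  (forall v, (v \in x :: y :: A ++ B) = (v < N)%N) ->
  entry_util b c 0 c0 (adj x y A B) N y =
  (b 1%N - c) + (1 + size B)%:R * b 2%N + (size A)%:R * b 3%N - c0 * (1 + size B)%:R.
Proof.
move=> hU hM.
have [hU' hM'] := univ_swap hU hM.
have [hU2 hM2] := univ_add hU' hM'.
rewrite /entry_util link_y [adj x y A (N :: B)]adj_swap [adj x y A B]adj_swap.
by rewrite (@S2d _ b c y x N B A N.+1 hU2 hM2).1 (S1 b c hU' hM').2.
Qed.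

Lemma Acc_y (x y : nat) (A B : seq nat) N : uniq (x :: y :: A ++ B) ->
  (forall v, (v \in x :: y :: A ++ B) = (v < N)%N) ->
  accepts b c 0 (adj x y A B) N y.
Proof.
move=> hU hM.
have [hU' hM'] := univ_swap hU hM.
have [hU2 hM2] := univ_add hU' hM'.
rewrite /accepts link_y [adj x y A (N :: B)]adj_swap [adj x y A B]adj_swap.
rewrite (S1 b c hU' hM').1 (@S1 _ b c y x (N :: B) A N.+1 hU2 hM2).1 /= !natrD -!nat1r.
arith.
Qed.

Lemma Ea (x y a : nat) (A B : seq nat) N : uniq (x :: y :: A ++ B) ->
  (forall v, (v \in x :: y :: A ++ B) = (v < N)%N) -> a \in A ->
  entry_util b c 0 c0 (adj x y A B) N a =
  (b 1%N - c) + b 2%N + (size A)%:R * b 3%N + (size B)%:R * b 4%N - c0.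
Proof.
move=> hU hM ha.
have hp := pickA1 (uniqA hU) ha.
have [hU1 hM1 ->] := transA hp hU hM.
rewrite /entry_util (@S8 _ b c x y a (rem a A) B N hU1 hM1).
rewrite (@S2d _ b c x y a (rem a A) B N hU1 hM1).2 (perm_size hp) /= -nat1r; ring.
Qed.

Lemma Ex (x y : nat) (A B : seq nat) N : uniq (x :: y :: A ++ B) ->
  (forall v, (v \in x :: y :: A ++ B) = (v < N)%N) ->
  entry_util b c 0 c0 (adj x y A B) N x =
  (b 1%N - c) + (1 + size A)%:R * b 2%N + (size B)%:R * b 3%N - c0 * (1 + size A)%:R.
Proof.
move=> hU hM; have [hU' hM'] := univ_swap hU hM.
by rewrite adj_swap (Ey hU' hM').
Qed.

Lemma Eb (x y e : nat) (A B : seq nat) N : uniq (x :: y :: A ++ B) ->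
  (forall v, (v \in x :: y :: A ++ B) = (v < N)%N) -> e \in B ->
  entry_util b c 0 c0 (adj x y A B) N e =
  (b 1%N - c) + b 2%N + (size B)%:R * b 3%N + (size A)%:R * b 4%N - c0.
Proof.
move=> hU hM he; have [hU' hM'] := univ_swap hU hM.
by rewrite adj_swap (Ea hU' hM').
Qed.

Definition DSinv n (g : graph) := exists x y (A B : seq nat),
  [/\ uniq (x :: y :: A ++ B), (forall v, (v \in x :: y :: A ++ B) = (v < n)%N),
     g = adj x y A B, (size A <= (size B).+1)%N & (size B <= (size A).+1)%N].

Lemma entry_wlog (x y : nat) (A B : seq nat) N T : uniq (x :: y :: A ++ B) ->
  (forall v, (v \in x :: y :: A ++ B) = (v < N)%N) ->
  (size B <= size A)%N -> (size A <= (size B).+1)%N -> (T < N)%N ->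
  (forall T', (T' < N)%N -> accepts b c 0 (adj x y A B) N T' ->
     entry_util b c 0 c0 (adj x y A B) N T' <= entry_util b c 0 c0 (adj x y A B) N T) ->
  DSinv N.+1 (add_link (adj x y A B) N T).
Proof.
move=> hU hM hBA hAB hT hmax.
have hy : (y < N)%N by rewrite -hM !in_cons eqxx orbT.
have hE := hmax y hy (Acc_y hU hM).
rewrite (Ey hU hM) in hE.
have [hU2 hM2] := univ_add hU hM.
have [hU' hM'] := univ_swap hU hM.
have hkA := ler0n R (size A); have hkB := ler0n R (size B).
move: hT; rewrite -hM !in_cons mem_cat => /orP[/eqP eT|/orP[/eqP eT|/orP[hTA|hTB]]].
-
  subst T.
  rewrite (Ex hU hM) in hE.
  case: (ltngtP (size A) (size B)) => hs; first by move: hs; rewrite ltnNge hBA.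
    have eA : size A = (size B).+1 by apply/eqP; rewrite eqn_leq hAB hs.
    exfalso; move: hE; rewrite eA -nat1r !natrD => hE.
    have := mulr_ge0 hkB (ltW hb3); arith.
  exists x, y, (N :: A), B; split => //=; first by rewrite link_x.
  + by rewrite hs.
  + by rewrite (leq_trans hBA) // leqW.
-
  subst T.
  have hp : perm_eq (x :: y :: N :: A ++ B) (x :: y :: A ++ N :: B).
    by rewrite !perm_cons perm_sym (perm_catCA A [:: N] B).
  have [hU3 hM3] := trans_univ hp hU2 hM2.
  exists x, y, A, (N :: B); split => //; first by rewrite link_y.
  by rewrite /= ?ltnS ?hBA // (leq_trans hAB).  
-
  move: hE; rewrite (Ea hU hM hTA) => hE.
  case: (posnP (size B)) => hB0.
    have eB : B = [::] by apply/size0nil.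
    have eA : A = [:: T].
      move: hTA hAB; rewrite hB0; case: (A) => [//|a [|a' A']] //=.
      by rewrite in_cons orbF => /eqP ->.
    subst A B.
    have hp : perm_eq (x :: y :: N :: [:: T] ++ [::]) (x :: T :: [:: y] ++ [:: N]).
      by rewrite perm_cons /= (perm_catCA [:: y; N] [:: T] [::]).
    have [hU3 hM3] := trans_univ hp hU2 hM2.
    by exists x, T, [:: y], [:: N]; split => //; rewrite link_leaf3.
  exfalso.
  have hkB1 : 0 < (size B)%:R :> R by rewrite ltr0n.
  have hd : 0 < b 2%N - b 4%N - c0 by arith.
  have := mulr_gt0 hkB1 hd; move: hE; rewrite !natrD => ? ?; arith.
-
  exfalso; move: hE; rewrite (Eb hU hM hTB) => hE.
  have hkB1 : 0 < (size B)%:R :> R by rewrite ltr0n (size_pos hTB).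
  have hd : 0 < b 2%N - b 4%N - c0 by arith.
  have hd2 : 0 <= b 3%N - b 4%N by arith.
  have hAB' : 0 <= (size A)%:R - (size B)%:R :> R by rewrite subr_ge0 ler_nat.
  have := mulr_gt0 hkB1 hd; have := mulr_ge0 hAB' hd2; move: hE; rewrite !natrD => ? ? ?.
  arith.
Qed.

End Entry.

From HB Require Import structures.
From mathcomp Require Import all_boot all_order all_algebra.
From mathcomp Require Import ring lra zify.
From Stdlib Require Import FunctionalExtensionality.
Set Implicit Arguments. Unset Strict Implicit. Unset Printing Implicit Defensive.
Import Order.TTheory GRing.Theory Num.Theory.
Local Open Scope ring_scope.

Lemma cntA (x y : nat) (A B : seq nat) N : uniq (x :: y :: A ++ B) ->
  (forall v, (v \in x :: y :: A ++ B) = (v < N)%N) ->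
  count (fun v => [&& v != x, v != y & adj x y A B x v]) (nodes N) = size A.
Proof.
move=> hU hM.
have [hU4 hm] := setup2 hU hM.
have F := uq_facts hU4.
rewrite -(permP (univ_perm hU hM)) /= count_cat !eqxx /= add0n.
have -> : count (fun v => [&& v != x, v != y & adj x y A B x v]) A = size A.
  rewrite -count_predT; apply: eq_in_count => w hw.
  have hw4 : w \in x :: y :: N :: N.+1 :: A ++ B by rewrite !in_cons mem_cat hw !orbT.
  move: hw; rewrite /adj; case: (catP hU4 hw4) => // _ _; by rewrite ?F ?eqxx.
have -> : count (fun v => [&& v != x, v != y & adj x y A B x v]) B = 0%N.
  rewrite -(count_pred0 B); apply: eq_in_count => w hw.
  have hw4 : w \in x :: y :: N :: N.+1 :: A ++ B by rewrite !in_cons mem_cat hw !orbT.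
  move: hw; rewrite /adj; case: (catP hU4 hw4) => // _ _; by rewrite ?F ?eqxx.
by rewrite andbF addn0.
Qed.

Lemma cntB (x y : nat) (A B : seq nat) N : uniq (x :: y :: A ++ B) ->
  (forall v, (v \in x :: y :: A ++ B) = (v < N)%N) ->
  count (fun v => [&& v != x, v != y & adj x y A B y v]) (nodes N) = size B.
Proof.
move=> hU hM; have [hU' hM'] := univ_swap hU hM.
rewrite -(cntA hU' hM') adj_swap; apply: eq_count => v.
by case: (v != x); case: (v != y).
Qed.

Lemma shape_2star (x y : nat) (A B : seq nat) n : uniq (x :: y :: A ++ B) ->
  (forall v, (v \in x :: y :: A ++ B) = (v < n)%N) ->
  (size A <= (size B).+1)%N -> (size B <= (size A).+1)%N -> (4 <= n)%N ->
  is_2star (adj x y A B) n.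
Proof.
move=> hU hM h1 h2 h4.
have hN : n = (2 + size A + size B)%N by rewrite -(univ_size hU hM) /= size_cat.
have [hU4 hm] := setup2 hU hM.
have F := uq_facts hU4.
split => //; exists x, y; split.
- by rewrite -hM mem_head.
- by rewrite -hM !in_cons eqxx orbT.
- by rewrite F.
- by rewrite /adj !eqxx.
split; rewrite ?cntA ?cntB //; try lia.
move=> v hv; rewrite /adj; case: (catP hU4 (hm v hv)) => ev //= _ _;
  rewrite ?F ?eqxx /=; first [lia | split => // w hw;
  case: (catP hU4 (hm w hw)) => ew //=; rewrite ?F ?eqxx //= ?andbF //; lia].
Qed.

Lemma shape_path (x y : nat) (A B : seq nat) n : uniq (x :: y :: A ++ B) ->
  (forall v, (v \in x :: y :: A ++ B) = (v < n)%N) -> (n <= 3)%N ->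
  is_path (adj x y A B) n.
Proof.
move=> hU hM h3.
have hN : n = (2 + size A + size B)%N by rewrite -(univ_size hU hM) /= size_cat.
case: A hU hM hN => [|a [|a' A']] hU hM hN; last by rewrite hN /= in h3; lia.
- case: B hU hM hN => [|e [|e' B']] hU hM hN; last by rewrite hN /= in h3; lia.
  + exists [:: x; y]; split; first exact: univ_perm.
    move=> v w _ _; rewrite /adj /= !in_nil.
    rewrite ![x == _]eq_sym ![y == _]eq_sym.
    by case: (v == x); case: (v == y); case: (w == x); case: (w == y).
  + exists [:: x; y; e]; split; first exact: univ_perm.
    move=> v w _ _; rewrite /adj /= !in_cons !in_nil.
    rewrite ![x == _]eq_sym ![y == _]eq_sym ![e == _]eq_sym.
    by case: (v == x); case: (v == y); case: (w == x); case: (w == y); case: (v == e); case: (w == e).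
- case: B hU hM hN => [|e B'] hU hM hN; last by rewrite hN /= in h3; lia.
  have hp : perm_eq [:: x; y; a] [:: a; x; y].
    by rewrite perm_sym (perm_catCA [:: a] [:: x; y] [::]) cats0.
  have [hU' hM'] := trans_univ hp hU hM.
  exists [:: a; x; y]; split; first exact: univ_perm.
  move=> v w _ _; rewrite /adj /= !in_cons !in_nil.
  rewrite ![x == _]eq_sym ![y == _]eq_sym ![a == _]eq_sym.
  by case: (v == x); case: (v == y); case: (w == x); case: (w == y); case: (v == a); case: (w == a).
Qed.

Section Main.
Variables (R : realFieldType) (b : nat -> R) (c c0 : R).
Hypotheses (h1pos : 0 < b 1%N - c) (h12 : b 1%N - c < b 2%N) (h13 : b 1%N - c <= b 3%N)
  (hb2 : 0 < b 2%N) (hb3 : 0 < b 3%N) (hb4 : 0 < b 4%N) (h34 : b 4%N < b 3%N)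
  (hc01 : b 2%N - b 3%N < c0) (hc02 : c0 < b 2%N - b 4%N).

Definition Inv n (g : graph) := (n = 1%N /\ g = (fun _ _ => false)) \/ DSinv n g.

Lemma pst_empty : pstable b c 0 (fun _ _ => false) 1.
Proof.
split; move=> i j hi hj //.
by move: hi hj; case: i; case: j.
Qed.

Lemma pst_inv n g : Inv n g -> pstable b c 0 g n.
Proof.
case=> [[-> ->]|[x [y [A [B [hU hM -> _ _]]]]]]; first exact: pst_empty.
exact: pst_DS.
Qed.

Lemma entry_inv n g T : Inv n g -> (T < n)%N ->
  (forall T', (T' < n)%N -> accepts b c 0 g n T' ->
     entry_util b c 0 c0 g n T' <= entry_util b c 0 c0 g n T) ->
  Inv n.+1 (add_link g n T).
Proof.
case=> [[-> ->]|[x [y [A [B [hU hM -> h1 h2]]]]]] hT hmax.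
  have eT : T = 0%N by case: T hT {hmax} => [|[]].
  subst T.
  right; exists 1%N, 0%N, [::], [::]; split => //.
    by case => [|[|v]].
  apply: functional_extensionality => v; apply: functional_extensionality => w.
  by rewrite /add_link /adj !in_nil /= !andbF !orbF.
right.
case: (leqP (size B) (size A)) => hBA.
  exact: (entry_wlog h1pos h12 h13 hb2 hb3 hb4 h34 hc01 hc02 hU hM hBA h1 hT hmax).
have [hU' hM'] := univ_swap hU hM.
rewrite adj_swap in hmax *.
exact: (entry_wlog h1pos h12 h13 hb2 hb3 hb4 h34 hc01 hc02 hU' hM' (ltnW hBA) h2 hT hmax).
Qed.

Lemma reached_inv n g : reached b c 0 c0 n g -> Inv n g.
Proof.
elim=> [|m g0 T _ IH _ hT _ _ hmax|m g0 g1 _ IH hn _].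
- by left.
- exact: entry_inv.
- by exfalso; apply: hn; apply: pst_inv.
Qed.

Lemma main n g : reached b c 0 c0 n g ->
  ((n <= 3)%N -> is_path g n) /\ ((4 <= n)%N -> is_2star g n).
Proof.
move/reached_inv; case=> [[-> ->]|[x [y [A [B [hU hM -> h1 h2]]]]]].
  split => // _; exists [:: 0%N]; split => //.
split => h.
  exact: shape_path.
exact: shape_2star.
Qed.

End Main.

From HB Require Import structures.
From mathcomp Require Import all_boot all_order all_algebra.
Import Order.TTheory GRing.Theory Num.Theory.
Local Open Scope ring_scope.

Unset Implicit Arguments.

Theorem corollary1 (R : realFieldType) (b : nat -> R) (c c0 : R)
  (hb_pos : forall i, (0 < i)%N -> 0 < b i)
  (hb_dec : forall i, (0 < i)%N -> b i.+1 < b i)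
  (hc1 : b 1%N - b 3%N <= c) (hc2 : c < b 1%N)
  (hc01 : b 2%N - b 3%N < c0) (hc02 : c0 < b 2%N - b 4%N) :
  forall (n : nat) (g : graph),
    reached b c 0 c0 n g -> pstable b c 0 g n ->
    ((n <= 3)%N -> is_path g n) /\ ((4 <= n)%N -> is_2star g n).
Proof.
move=> n g hr _.
have h32 : b 3%N < b 2%N := hb_dec 2%N isT.
have h1pos : 0 < b 1%N - c by rewrite subr_gt0.
have h13 : b 1%N - c <= b 3%N by rewrite lerBlDr -lerBlDl.
have h12 : b 1%N - c < b 2%N := le_lt_trans h13 h32.
exact: (main h1pos h12 h13 (hb_pos 2%N isT) (hb_pos 3%N isT) (hb_pos 4%N isT)
  (hb_dec 3%N isT) hc01 hc02 hr).
Qed.
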